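(* Let $p$ be a prime and let $\mathrm{E}_p(X)=\sum_{n=0}^{\infty} a_n X^n\in\mathbb{F}_p[[X]]$ be the reduction modulo $p$ of the Artin-Hasse exponential series. Define $c_{jp}=a_{jp}$ for $0\le j<p-1$ and $c_{(p-1)p}=a_{(p-1)p}+1$. Then for all integers $0\le k<p$ and $0\le r<p$ we have, in $\mathbb{F}_p$, \[ a_{rp+k}=(-1)^{k+1}\sum_{j=0}^{r}{p-k \brack j+1}\,c_{(r-j)p}. \]
   Context: The Artin-Hasse exponential series is $\mathrm{AH}(X)=\exp\bigl(\sum_{i=0}^{\infty}X^{p^i}/p^i\bigr)\in\mathbb{Q}[[X]]$; its coefficients are $p$-integral, so it can be reduced modulo $p$, giving $\mathrm{E}_p(X)\in\mathbb{F}_p[[X]]$. The unsigned Stirling numbers of the first kind ${n \brack i}$ ($0\le i\le n$) are defined by $y(y+1)\cdots(y+n-1)=\sum_{i=0}^{n}{n \brack i}y^i$ in $\mathbb{Z}[y]$, with ${n\brack i}=0$ for $i>n$; they are read modulo $p$ in the formula. *)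

(* Defs.v *)
From mathcomp Require Import all_boot all_order all_algebra.
Set Implicit Arguments. Unset Strict Implicit. Unset Printing Implicit Defensive.
Import Order.TTheory GRing.Theory Num.Theory.
Local Open Scope ring_scope.

Definition ps := nat -> rat.

Definition ps_one : ps := fun n => (n == 0%N)%:R.

Definition ps_mul (f g : ps) : ps :=
  fun n => \sum_(i < n.+1) f i * g (n - i)%N.

Definition ps_pow (f : ps) (m : nat) : ps := iter m (ps_mul f) ps_one.

(* exp(f) = sum_m f^m / m!, for f with zero constant term: the coefficient
   of X^n only involves m <= n. *)
Definition ps_exp (f : ps) : ps :=
  fun n => \sum_(m < n.+1) ps_pow f m n / (m`!)%:R.

(* sum_{i >= 0} X^(p^i) / p^i *)
Definition AH_arg (p : nat) : ps :=
  fun n => if [exists i : 'I_n.+1, (p ^ i)%N == n] then (n%:R)^-1 else 0.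

Definition AH (p : nat) : ps := ps_exp (AH_arg p).

(* Reduction modulo p of a (p-integral) rational number. *)
Definition redp (p : nat) (q : rat) : 'F_p :=
  (numq q)%:~R / (denq q)%:~R.

Definition Ep_coef (p n : nat) : 'F_p := redp p (AH p n).

Definition stirling1 (n i : nat) : int :=
  (\prod_(m < n) ('X + (m%:Z)%:P) : {poly int})`_i.

(* Main.v *)
Require Import Defs.
From mathcomp Require Import all_boot all_order all_algebra all_field zify ring.
Import GRing.Theory Num.Theory.
Local Open Scope ring_scope.

Lemma prodX_coefS (R : comNzRingType) n i :
  (\prod_(m < n.+1) ('X + (m%:R)%:P) : {poly R})`_i.+1 =
  n%:R * (\prod_(m < n) ('X + (m%:R)%:P) : {poly R})`_i.+1 +
  (\prod_(m < n) ('X + (m%:R)%:P) : {poly R})`_i.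
Proof.
rewrite big_ord_recr /= mulrDr coefD coefMX coefMC /= addrC mulrC.
by [].
Qed.

Lemma prodX_coef0 (R : comNzRingType) n :
  (\prod_(m < n.+1) ('X + (m%:R)%:P) : {poly R})`_0 =
  n%:R * (\prod_(m < n) ('X + (m%:R)%:P) : {poly R})`_0.
Proof.
by rewrite big_ord_recr /= mulrDr coefD coefMX coefMC /= add0r mulrC.
Qed.

Lemma stirling1E n i : stirling1 n i =
  (\prod_(m < n) ('X + (m%:R)%:P) : {poly int})`_i.
Proof. rewrite /stirling1. under eq_bigr do rewrite -natz. by []. Qed.

Section Fp.
Variable p : nat.
Hypothesis hp : prime p.

Definition stF n i : 'F_p := (stirling1 n i)%:~R.

Lemma stF_poly n i : stF n i = (\prod_(m < n) ('X + (m%:R)%:P) : {poly 'F_p})`_i.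
Proof.
rewrite /stF stirling1E.
elim: n i => [|n IH] i.
  by rewrite !big_ord0 !coef1 rmorph_nat.
case: i => [|i].
  by rewrite !prodX_coef0 intrM IH rmorph_nat.
by rewrite (prodX_coefS int) (prodX_coefS _ n i) intrD intrM !IH rmorph_nat.
Qed.

Lemma p_gt1 : (1 < p)%N. Proof. exact: prime_gt1. Qed.

Lemma prodX_Fp : (\prod_(m < p) ('X + (m%:R)%:P) : {poly 'F_p}) = 'X^p - 'X.
Proof.
have := @finField_genPoly 'F_p.
rewrite card_Fp // => ->.
change ((\prod_(m < p) ('X + (m%:R)%:P) : {poly 'F_p}) = \prod_(x < (Zp_trunc (pdiv p)).+2) ('X - (x : 'F_p)%:P)).
under [RHS]eq_bigr do rewrite -[X in X%:P](natr_Zp).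
rewrite -(big_mkord xpredT (fun x : nat => 'X - (x%:R : 'F_p)%:P)).
rewrite Fp_cast // -(big_mkord xpredT (fun x : nat => 'X + (x%:R : 'F_p)%:P)).
rewrite [RHS]big_nat_rev /= add0n.
rewrite [RHS](eq_big_nat _ _ (F2 := fun i => 'X + ((i.+1)%:R : 'F_p)%:P)); last first.
  move=> i /andP [_ hi]; rewrite -polyCN; congr (_ + _%:P).
  by rewrite natrB // pchar_Fp_0 // sub0r opprK.
case: p hp => [|q] hq; first by [].
rewrite big_nat_recl // big_nat_recr //= pchar_Fp_0 // addr0 mulrC.
by congr (_ * _); rewrite addr0.
Qed.

Lemma stF_p i : stF p i = (i == p)%:R - (i == 1)%:R.
Proof. by rewrite stF_poly prodX_Fp coefB coefXn coefX. Qed.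

Lemma stF_0 i : stF 0 i = (i == 0)%:R.
Proof. by rewrite stF_poly big_ord0 coef1. Qed.

Lemma stF_S n i : stF n.+1 i.+1 = n%:R * stF n i.+1 + stF n i.
Proof. by rewrite !stF_poly prodX_coefS. Qed.

Lemma stF_S0 n : stF n.+1 0 = 0.
Proof.
elim: n => [|n IH]; first by rewrite stF_poly prodX_coef0 mul0r.
by rewrite stF_poly prodX_coef0 -stF_poly IH mulr0.
Qed.

Lemma stF_1 j : stF 1 j.+1 = (j == 0)%:R.
Proof. by rewrite stF_S mul0r add0r stF_0. Qed.

Lemma Fp_m1p : (-1 : 'F_p) ^+ p = -1.
Proof. by have := @expf_card 'F_p (-1); rewrite card_Fp. Qed.

Lemma Fp_nat_eq0 n : ((n%:R : 'F_p) == 0) = (p %| n)%N.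
Proof. by rewrite (dvdn_pcharf (pchar_Fp hp)). Qed.

End Fp.



Section Abs.
Variable p : nat.
Hypothesis hp : prime p.
Variable a : nat -> 'F_p.
Variable N : nat.
Hypothesis a0 : a 0 = 1.
Hypothesis rec : forall m, (0 < m)%N -> (m < N)%N -> ~~ (p %| m)%N ->
  m%:R * a m = a m.-1 + (p <= m)%N%:R * a (m - p).

Let c := fun j : nat => a (j * p)%N + ((j == p.-1)%N)%:R.
Let T k r := \sum_(j < r.+1) ((stirling1 (p - k) j.+1)%:~R * c (r - j)%N).

Lemma sum_ind (r i : nat) (F : nat -> 'F_p) :
  \sum_(j < r) (j == i :> nat)%:R * F j = if (i < r)%N then F i else 0.
Proof.
rewrite -(big_ord1_eq +%R F i r) [RHS]big_mkcond /=; apply: eq_bigr => j _.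
by case: eqP; rewrite ?mul1r ?mul0r.
Qed.

Lemma abs_k0 r : (r < p)%N -> (r * p < N)%N -> a (r * p) = - T 0 r.
Proof.
move=> hr _; rewrite /T subn0.
under eq_bigr do rewrite -/(stF p _ _) stF_p // mulrBl.
rewrite sumrB.
have -> : \sum_(j < r.+1) ((j.+1 == p)%:R * c (r - j)%N) =
          \sum_(j < r.+1) ((j == p.-1 :> nat)%:R * c (r - j)%N).
  apply: eq_bigr => j _; congr (_%:R * _).
  by case: p hp => // q _; rewrite eqSS.
rewrite (sum_ind _ _ (fun j => c (r - j)%N)).
rewrite (sum_ind _ _ (fun j => c (r - j)%N)) /= subn0 /c.
have p1 := prime_gt1 hp.
case: ltnP => h.
  have -> : r = p.-1 by lia.
  rewrite subnn mul0n a0 eqxx.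
  have -> : (0 == p.-1)%N = false by apply/eqP; lia.
  by rewrite addr0 opprB addrK.
have -> : (r == p.-1)%N = false by apply/eqP; move: h; case: (p) p1 => // q _ /=; lia.
by rewrite addr0 sub0r opprK.
Qed.

Lemma abs_step r k : (k.+1 < p)%N -> (r * p + k.+1 < N)%N ->
  a (r * p + k) = (-1) ^+ k.+1 * T k r ->
  (p <= r * p + k.+1)%N%:R * a (r * p + k.+1 - p) =
    (-1) ^+ k.+2 * \sum_(j < r) ((stirling1 (p - k.+1) j.+1)%:~R * c (r.-1 - j)%N) ->
  a (r * p + k.+1) = (-1) ^+ k.+2 * T k.+1 r.
Proof.
move=> hk hN H1 H2.
have hpos : (0 < r * p + k.+1)%N by rewrite addnS.
have hrec := rec _ hpos hN.
have hd : ~~ (p %| r * p + k.+1)%N.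
  by rewrite dvdn_addr ?dvdn_mull // gtnNdvd.
move: (hrec hd); rewrite H2.
have -> : (r * p + k.+1).-1 = (r * p + k)%N by rewrite addnS.
rewrite H1 natrD natrM pchar_Fp_0 // mulr0 add0r.
have hs : (p - k = (p - k.+1).+1)%N by lia.
set s := (p - k.+1)%N.
set U := \sum_(j < r) _.
have hs0 : stF p s 0 = 0.
  have -> : s = (s.-1).+1 by rewrite /s; lia.
  exact: stF_S0.
have ET : T k r = s%:R * T k.+1 r + U.
  rewrite /T hs -/s.
  under eq_bigr do rewrite -/(stF p _ _) stF_S mulrDl -mulrA.
  rewrite big_split /= -big_distrr /= [\sum_(i < r.+1) stF p s i * _]big_ord_recl /= hs0 mul0r add0r.
  congr (_ * _ + _); apply: eq_bigr => j _; rewrite /bump /= add1n /stF.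
  by congr (_ * c _); lia.
have hsN : (s%:R : 'F_p) = - (k.+1)%:R.
  by rewrite /s natrB ?pchar_Fp_0 // ?sub0r // ltnW.
rewrite hsN in ET.
have knz : (k.+1%:R : 'F_p) != 0 by rewrite Fp_nat_eq0 // gtnNdvd.
rewrite ET => E; apply: (mulfI knz); rewrite E.
rewrite !exprS; ring.
Qed.

Lemma abs_main r k : (k < p)%N -> (r < p)%N -> (r * p + k < N)%N ->
  a (r * p + k) = (-1) ^+ k.+1 * T k r.
Proof.
elim: r k => [|r IHr] k.
  elim: k => [|k IHk] hk hr hN.
    by rewrite addn0 abs_k0 // expr1 mulN1r.
  apply: (abs_step _ _ hk hN (IHk (ltnW hk) hr (ltnW hN))).
  by rewrite mul0n add0n big_ord0 mulr0 leqNgt hk mul0r.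
elim: k => [|k IHk] hk hr hN.
  by rewrite addn0 in hN *; rewrite abs_k0 // expr1 mulN1r.
have hN' : (r.+1 * p + k < N)%N by lia.
apply: (abs_step _ _ hk hN (IHk (ltnW hk) hr hN')).
have -> : (p <= r.+1 * p + k.+1)%N by rewrite mulSn -addnA leq_addr.
have -> : (r.+1 * p + k.+1 - p = r * p + k.+1)%N by rewrite mulSn -addnA addKn.
rewrite mul1r IHr //; first by apply: ltnW.
by apply: leq_ltn_trans hN; rewrite mulSn -addnA leq_addl.
Qed.
End Abs.


Section Red.
Variable p : nat.
Hypothesis hp : prime p.

Definition pint (q : rat) := exists u v : int, (v%:~R : 'F_p) != 0 /\ q = u%:~R / v%:~R.

Lemma Fp_int0 (z : int) : ((z%:~R : 'F_p) == 0) = (p %| z)%Z.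
Proof. by rewrite (dvdz_pcharf (pchar_Fp hp)). Qed.

Lemma v_nz {v : int} : (v%:~R : 'F_p) != 0 -> (v%:~R : rat) != 0.
Proof. by apply: contra; rewrite intq_eq0 => /eqP ->. Qed.

Lemma redp_frac (u v : int) : (v%:~R : 'F_p) != 0 ->
  redp p (u%:~R / v%:~R) = u%:~R / v%:~R.
Proof.
move=> hv; have hvq := v_nz hv.
set q := (u%:~R / v%:~R : rat).
have E : numq q * v = u * denq q.
  apply: (@intr_inj rat); rewrite !intrM.
  have dq : (denq q)%:~R != 0 :> rat by rewrite intq_eq0 denq_neq0.
  have := divq_num_den q; rewrite /q => /eqP; rewrite eqr_div // => /eqP.
  by rewrite -/q => ->.
have EF : ((numq q)%:~R * v%:~R : 'F_p) = u%:~R * (denq q)%:~R.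
  by rewrite -!intrM E.
have hd : ((denq q)%:~R : 'F_p) != 0.
  apply/negP => /eqP hd0.
  move: EF; rewrite hd0 mulr0 => /eqP; rewrite mulf_eq0 (negbTE hv) orbF.
  rewrite Fp_int0 => hn.
  have := coprime_num_den q; rewrite /coprime.
  move: hd0 => /eqP; rewrite Fp_int0 => hdd.
  have hn' : (p %| `|numq q|)%N := hn. have hdd' : (p %| `|denq q|)%N := hdd.
  have : (p %| gcdn `|numq q| `|denq q|)%N by rewrite dvdn_gcd hn' hdd'.
  move=> /[swap] /eqP ->; rewrite dvdn1 => /eqP hp1.
  by move: hp; rewrite hp1.
by rewrite /redp; apply/eqP; rewrite eqr_div // EF.
Qed.

Lemma pint_red x : pint x ->
  exists u v : int, [/\ (v%:~R : 'F_p) != 0, x = u%:~R / v%:~R & redp p x = u%:~R / v%:~R].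
Proof. by case=> u [v [hv ->]]; exists u, v; split => //; rewrite redp_frac. Qed.

Lemma pintD x y : pint x -> pint y -> pint (x + y) /\ redp p (x + y) = redp p x + redp p y.
Proof.
move=> /pint_red [u1 [v1 [h1 -> r1]]] /pint_red [u2 [v2 [h2 -> r2]]].
rewrite r1 r2.
have hv : ((v1 * v2)%:~R : 'F_p) != 0 by rewrite intrM mulf_neq0.
have E : (u1%:~R / v1%:~R + u2%:~R / v2%:~R : rat) = (u1 * v2 + u2 * v1)%:~R / (v1 * v2)%:~R.
  have := v_nz h1; have := v_nz h2; move=> n2 n1.
  rewrite intrD !intrM; field; by apply/andP.
rewrite E; split; first by exists (u1 * v2 + u2 * v1), (v1 * v2).
rewrite redp_frac // intrD !intrM; field; by apply/andP.
Qed.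

Lemma pintM x y : pint x -> pint y -> pint (x * y) /\ redp p (x * y) = redp p x * redp p y.
Proof.
move=> /pint_red [u1 [v1 [h1 -> r1]]] /pint_red [u2 [v2 [h2 -> r2]]].
rewrite r1 r2.
have hv : ((v1 * v2)%:~R : 'F_p) != 0 by rewrite intrM mulf_neq0.
have E : (u1%:~R / v1%:~R * (u2%:~R / v2%:~R) : rat) = (u1 * u2)%:~R / (v1 * v2)%:~R.
  have := v_nz h1; have := v_nz h2; move=> n2 n1.
  rewrite !intrM; field; by apply/andP.
rewrite E; split; first by exists (u1 * u2), (v1 * v2).
rewrite redp_frac // !intrM; field; by apply/andP.
Qed.

Lemma pint_int (z : int) : pint z%:~R /\ redp p z%:~R = z%:~R.
Proof.
have h1 : ((1 : int)%:~R : 'F_p) != 0 by rewrite oner_eq0.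
have E : (z%:~R : rat) = z%:~R / (1 : int)%:~R by rewrite divr1.
split; first by exists z, 1.
by rewrite E redp_frac // divr1.
Qed.

Lemma pint_nat (n : nat) : pint n%:R /\ redp p n%:R = n%:R.
Proof. by have := pint_int n; rewrite !pmulrn. Qed.

Lemma pint_divn x (n : nat) : pint x -> (n%:R : 'F_p) != 0 ->
  pint (x / n%:R) /\ redp p (x / n%:R) = redp p x / n%:R.
Proof.
move=> /pint_red [u [v [h -> r]]] hn; rewrite r.
have hv : ((v * n)%:~R : 'F_p) != 0 by rewrite intrM mulf_neq0 // pmulrn.
have hnq : (n%:R : rat) != 0 by apply: contra hn; rewrite pnatr_eq0 => /eqP ->.
have E : (u%:~R / v%:~R / n%:R : rat) = u%:~R / (v * n)%:~R.
  have := v_nz h => nv.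
  rewrite !intrM pmulrn; field; by apply/andP.
rewrite E; split; first by exists u, (v * n).
by rewrite redp_frac // intrM pmulrn invfM mulrA.
Qed.

Lemma pint_divp x : pint x -> redp p x = 0 -> pint (x / p%:R).
Proof.
move=> /pint_red [u [v [h -> r]]]; rewrite r => /eqP.
rewrite mulf_eq0 invr_eq0 (negbTE h) orbF Fp_int0 => hu.
exists (u %/ p)%Z, v; split => //.
rewrite -{1}(divzK hu) intrM -pmulrn.
have := v_nz h => nv.
have hp0 : (p%:R : rat) != 0 by rewrite pnatr_eq0 -lt0n prime_gt0.
field; by apply/andP.
Qed.

End Red.


Definition Pt (N : nat) (g : ps) : {poly rat} := \poly_(i < N) g i.

Lemma pow_coef g m n N : (n < N)%N -> ps_pow g m n = ((Pt N g) ^+ m)`_n.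
Proof.
elim: m n => [|m IH] n hn.
  by rewrite expr0 coef1 /ps_pow /= /ps_one.
rewrite exprS coefM /ps_pow iterS -/(ps_pow g m) /ps_mul.
apply: eq_bigr => j _; rewrite coef_poly.
have hj : (j < N)%N by apply: leq_ltn_trans hn; rewrite -ltnS.
rewrite hj IH //; apply: leq_ltn_trans hn; exact: leq_subr.
Qed.

Lemma pow_low g m n N : g 0%N = 0 -> (n < m)%N -> ((Pt N g) ^+ m)`_n = 0.
Proof.
move=> g0; elim: m n => [|m IH] n //= hn.
rewrite exprS coefM big1 // => -[j hj] _ /=.
case: j hj => [|j] hj.
  by rewrite coef_poly; case: ifP => _; rewrite ?g0 mul0r.
by rewrite IH ?mulr0 //; lia.
Qed.

Definition Es (M : nat) (P : {poly rat}) := \sum_(m < M) ((m`!)%:R^-1 : rat) *: P ^+ m.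

Lemma exp_coef g n M N : g 0%N = 0 -> (n < M)%N -> (n < N)%N ->
  ps_exp g n = (Es M (Pt N g))`_n.
Proof.
move=> g0 hM hN; rewrite /ps_exp /Es coef_sum.
rewrite (big_ord_widen M (fun m => ps_pow g m n / (m`!)%:R)) // big_mkcond /=.
apply: eq_bigr => -[m hm] _ /=; rewrite coefZ mulrC.
case: ltnP => h; first by rewrite (pow_coef _ _ _ _ hN).
by rewrite pow_low ?mulr0.
Qed.

Lemma Es_deriv M P : (Es M.+1 P)^`() = Es M P * P^`().
Proof.
rewrite /Es raddf_sum big_ord_recl /= expr0 derivZ derivC scaler0 add0r.
rewrite mulr_suml; apply: eq_bigr => i _.
rewrite derivZ deriv_exp /bump /= add1n -scaler_nat scalerA factS natrM.
rewrite invfM mulrAC mulVf ?pnatr_eq0 // mul1r add0n -scalerAl mulrC.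
by [].
Qed.

Lemma sum_indR (R : nzRingType) (r i : nat) (F : nat -> R) :
  \sum_(j < r) (j == i :> nat)%:R * F j = if (i < r)%N then F i else 0.
Proof.
rewrite -(big_ord1_eq +%R F i r) [RHS]big_mkcond /=; apply: eq_bigr => j _.
by case: eqP; rewrite ?mul1r ?mul0r.
Qed.

Section AHrec.
Variable p : nat.
Hypothesis hp : prime p.

Lemma AH_exists t : (0 < t)%N -> (t < p * p)%N ->
  [exists i : 'I_t.+1, (p ^ i)%N == t] = (t == 1)%N || (t == p).
Proof.
have p1 := prime_gt1 hp.
move=> t0 tp; apply/existsP/orP.
  case=> -[[|[|i]] hi] /= /eqP ht; [by left; rewrite -ht | by right; rewrite -ht expn1 |].
  rewrite -ht in tp.
  exfalso; have e : (p * p = p ^ 2)%N by rewrite expnS expn1.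
  have H : (p ^ 2 <= p ^ i.+2)%N by apply: leq_pexp2l; [apply: ltnW|].
  by move: tp; rewrite e => tp; have := leq_ltn_trans H tp; rewrite ltnn.
case=> /eqP ht.
  by exists (Ordinal (ltn0Sn t)); rewrite expn0 ht.
have h1 : (1 < t.+1)%N by rewrite ht ltnS ltnW.
by exists (Ordinal h1); rewrite expn1 ht.
Qed.

Lemma AH_arg_w t : (0 < t)%N -> (t < p * p)%N ->
  AH_arg p t *+ t = (t == 1)%N%:R + (t == p)%:R.
Proof.
move=> t0 tp; rewrite /AH_arg AH_exists //.
have p1 := prime_gt1 hp.
case: (eqVneq t 1%N) => [->|h1] /=.
  by rewrite (_ : (1 == p)%N = false) ?addr0 ?invr1 //; apply/eqP; lia.
case: (eqVneq t p) => [->|hp'] /=.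
  by rewrite add0r -[_ *+ p]mulr_natr mulVf // pnatr_eq0 -lt0n ltnW.
by rewrite addr0 -[_ *+ t]mulr_natr mul0r.
Qed.

Lemma AH_arg0 : AH_arg p 0 = 0.
Proof. by rewrite /AH_arg; case: ifP => _ //; rewrite invr0. Qed.

Lemma AH0 : AH p 0 = 1.
Proof.
by rewrite /AH /ps_exp big_ord1 /= /ps_pow /= /ps_one /= divr1.
Qed.

Lemma recQ n : (0 < n)%N -> (n < p * p)%N ->
  n%:R * AH p n = AH p n.-1 + (p <= n)%N%:R * AH p (n - p)%N.
Proof.
case: n => [//|n] _ hn.
have Ed := congr1 (fun P : {poly rat} => P`_n) (Es_deriv n.+1 (Pt n.+2 (AH_arg p))).
move: Ed; rewrite /= coef_deriv -(exp_coef _ _ _ _ AH_arg0) // coefM.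
rewrite mulr_natl => ->.
rewrite (eq_bigr (fun j : 'I_n.+1 => AH p j *
   (((j : nat) == n)%:R + (((j : nat) == (n.+1 - p)%N) && (p <= n.+1)%N)%:R))); last first.
  move=> [j hj] _ /=.
  rewrite -(exp_coef _ _ _ _ AH_arg0) //; last by apply: (ltn_trans hj).
  rewrite coef_deriv coef_poly ltnS ltnS leq_subr AH_arg_w //; last by lia.
  congr (_ * (_ + _)).
    by congr (_%:R); apply/eqP/eqP; lia.
  congr (_%:R); by case: eqP => h; case: eqP => h'; case: leqP => h'' //=; exfalso; lia.
under eq_bigr do rewrite mulrDr ![AH p _ * _]mulrC.
rewrite big_split /= (sum_indR _ _ _ (AH p)) ltnSn.
case: leqP => h.
  under eq_bigr do rewrite andbT.
  by rewrite (sum_indR _ _ _ (AH p)) ltn_subrL (prime_gt0 hp) mul1r.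
under eq_bigr do rewrite andbF mul0r.
by rewrite big1 // addr0 mul0r addr0.
Qed.
End AHrec.


Section Fin.
Variable p : nat.
Hypothesis hp : prime p.

Lemma recF N : (N <= p * p)%N -> (forall m, (m < N)%N -> pint p (AH p m)) ->
  forall m, (0 < m)%N -> (m < N)%N -> ~~ (p %| m)%N ->
  m%:R * Ep_coef p m = Ep_coef p m.-1 + (p <= m)%N%:R * Ep_coef p (m - p)%N.
Proof.
move=> hN hpi m m0 mN _.
have E := recQ p hp m m0 (leq_trans mN hN).
have pm := hpi m mN.
have pm1 : pint p (AH p m.-1) by apply: hpi; apply: leq_ltn_trans mN; apply: leq_pred.
have pmp : pint p (AH p (m - p)%N) by apply: hpi; apply: leq_ltn_trans mN; apply: leq_subr.
rewrite /Ep_coef -(pint_nat p hp m).2 -(pintM p hp _ _ (pint_nat p hp m).1 pm).2 E.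
rewrite (pintD p hp _ _ pm1 (pintM p hp _ _ (pint_nat p hp _).1 pmp).1).2.
by rewrite (pintM p hp _ _ (pint_nat p hp _).1 pmp).2 (pint_nat p hp _).2.
Qed.

Lemma Ep0 : Ep_coef p 0 = 1.
Proof. by rewrite /Ep_coef AH0 -(mulr1n 1) (pint_nat p hp 1).2. Qed.

Lemma pint_all n : (n < p * p)%N -> pint p (AH p n).
Proof.
elim/ltn_ind: n => n IH hn.
case: n IH hn => [|n] IH hn.
  by rewrite AH0; have := (pint_nat p hp 1).1; rewrite mulr1n.
have hpi : forall k, (k < n.+1)%N -> pint p (AH p k).
  by move=> k hk; apply: IH => //; apply: ltn_trans hn.
set x := AH p n + (p <= n.+1)%N%:R * AH p (n.+1 - p)%N.
have pmp : pint p (AH p (n.+1 - p)%N).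
  by apply: hpi; rewrite ltn_subrL prime_gt0.
have px : pint p x.
  exact: (pintD p hp _ _ (hpi _ (ltnSn n)) (pintM p hp _ _ (pint_nat p hp _).1 pmp).1).1.
have hn0 : (n.+1%:R : rat) != 0 by rewrite pnatr_eq0.
have Eb : AH p n.+1 = x / n.+1%:R.
  by apply: (mulfI hn0); rewrite [RHS]mulrC divfK // (recQ p hp n.+1 (ltn0Sn n) hn).
have p0 := prime_gt0 hp.
case: (boolP (p %| n.+1)%N) => hd; last first.
  have hnz : (n.+1%:R : 'F_p) != 0 by rewrite Fp_nat_eq0.
  by rewrite Eb; apply: (pint_divn p hp _ _ px hnz).1.
have [r Er] : exists r, n.+1 = (r.+1 * p)%N.
  move: hd => /dvdnP [[|r] Er]; first by rewrite mul0n in Er.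
  by exists r.
have hr : (r.+1 < p)%N.
  rewrite ltnNge; apply/negP => h; move: hn; rewrite Er.
  by rewrite ltnNge leq_mul.
have rnz : (r.+1%:R : 'F_p) != 0 by rewrite Fp_nat_eq0 // gtnNdvd.
have redx : redp p x = 0.
  rewrite (pintD p hp _ _ (hpi _ (ltnSn n)) (pintM p hp _ _ (pint_nat p hp _).1 pmp).1).2.
  rewrite (pintM p hp _ _ (pint_nat p hp _).1 pmp).2 (pint_nat p hp _).2.
  have hpn : (p <= n.+1)%N by rewrite Er mulSn leq_addr.
  rewrite hpn mul1r.
  have A := abs_main p hp _ _ Ep0 (recF _ (ltnW hn) hpi) r p.-1.
  have e1 : (r * p + p.-1 = n)%N by move: Er; rewrite mulSn; lia.
  have e2 : (r * p = n.+1 - p)%N by move: Er; rewrite mulSn; lia.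
  move: A; rewrite e1 => /(_ _ _ _) A.
  have := A (_ : p.-1 < p)%N (ltnW hr) (ltnSn n).
  rewrite /Ep_coef => ->.
  rewrite prednK // Fp_m1p // big_ord_recl /= big1; last first.
    move=> i _; rewrite -/(stF p _ _).
    have -> : (p - p.-1)%N = 1%N by lia.
    by rewrite stF_1 mul0r.
  have -> : (p - p.-1)%N = 1%N by lia.
  rewrite -/(stF p _ _) stF_1 mul1r subn0 addr0 -e2.
  have -> : (r == p.-1)%N = false by apply/eqP; lia.
  by rewrite addr0 mulN1r /Ep_coef addNr.
  by rewrite prednK // ltnSn.
rewrite Eb.
have -> : x / n.+1%:R = (x / p%:R) / r.+1%:R.
  rewrite Er natrM -mulrA -invfM mulrC //.
  by rewrite [r.+1%:R * _]mulrC mulrC.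
exact: (pint_divn p hp _ _ (pint_divp p hp _ px redx) rnz).1.
Qed.
End Fin.


Theorem proposition1p4 (p : nat) (hp : prime p) (k r : nat)
    (hk : (k < p)%N) (hr : (r < p)%N) :
  let a := Ep_coef p in
  let c := fun j : nat => a (j * p)%N + ((j == p.-1)%N)%:R in
  a (r * p + k)%N =
    (-1) ^+ k.+1 *
    \sum_(j < r.+1) ((stirling1 (p - k) j.+1)%:~R * c (r - j)%N).
Proof.
move=> a c.
have hN : (r * p + k < p * p)%N.
  apply: (@leq_trans (r.+1 * p)); first by rewrite mulSn addnC ltn_add2r.
  by rewrite leq_mul2r hr orbT.
exact: (abs_main p hp _ _ (Ep0 p hp) (recF p hp _ (leqnn _) (pint_all p hp)) r k hk hr hN).
Qed.
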